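(* Let $G$ be a permutation group, $K$ a smooth $G$-field and $n>0$ an integer. Put $k:=K^G$ and $\mu_n:=\{z\in K^\times:z^n=1\}$. Then there is a natural exact sequence $$H^1_{\mathrm{cont}}(G,\mu_n)\to{}_n\mathrm{Pic}_K(G)\to(K^\times/K^{\times n})^G/k^\times\to H^2_{\mathrm{cont}}(G,\mu_n).$$ Moreover, if $G$ has no proper open subgroups of finite index, then every invertible object $\mathcal L$ of $\mathrm{Sm}_K(G)$ of order $n$ in $\mathrm{Pic}_K(G)$ is contained in a $G$-field $K(a^{1/n})$ for some $a$ whose class in $K^\times/K^{\times n}$ is $G$-invariant.
   Context: A permutation group is a Hausdorff topological group admitting a base of open sets consisting of left and right translates of subgroups. A smooth $G$-field is a field with a $G$-action by automorphisms with open stabilizers of all elements. $\mathrm{Sm}_K(G)$ is the category of smooth left modules over the skew group ring $K\langle G\rangle$ ($(a[g])(b[h])=ab^g[gh]$), a tensor category under $\otimes_K$ with unit $K$. An object is invertible if it is one-dimensional over $K$; $\mathrm{Pic}_K(G)$ is the group of isomorphism classes of invertible objects under $\otimes_K$ (equal to $H^1_{\mathrm{cont}}(G,K^\times)$), and ${}_n\mathrm{Pic}_K(G)$ its $n$-torsion subgroup. $H^i_{\mathrm{cont}}$ is continuous cohomology with discrete coefficients; $\mu_n$ carries the restricted $G$-action. $k^\times$ maps to $(K^\times/K^{\times n})^G$ via inclusion. ''$\mathcal L$ is contained in $K(a^{1/n})$'' means $\mathcal L$ embeds $G$-equivariantly as a $K$-subspace of a $G$-field extension $K(a^{1/n})$.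 *)

(* Defs.v *)
From HB Require Import structures.
From Stdlib Require List.
From mathcomp Require Import all_boot all_algebra.
Set Implicit Arguments. Unset Strict Implicit. Unset Printing Implicit Defensive.
Import GRing.Theory.
Local Open Scope ring_scope.

Record permGroup := PermGroup {
  pg_sort :> Type;
  pg_mul : pg_sort -> pg_sort -> pg_sort;
  pg_one : pg_sort;
  pg_inv : pg_sort -> pg_sort;
  pg_mulA : forall x y z, pg_mul x (pg_mul y z) = pg_mul (pg_mul x y) z;
  pg_mul1 : forall x, pg_mul pg_one x = x;
  pg_mulV : forall x, pg_mul (pg_inv x) x = pg_one;
  pg_open : (pg_sort -> Prop) -> Prop;
  pg_open_setT : pg_open (fun _ => True);
  pg_open_union : forall (I : Type) (F : I -> pg_sort -> Prop),
    (forall i, pg_open (F i)) -> pg_open (fun x => exists i, F i x);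
  pg_open_inter : forall U V, pg_open U -> pg_open V ->
    pg_open (fun x => U x /\ V x);
  pg_mul_cont : forall W x y, pg_open W -> W (pg_mul x y) ->
    exists U V, [/\ pg_open U, pg_open V, U x, V y &
                    forall u v, U u -> V v -> W (pg_mul u v)];
  pg_inv_cont : forall W x, pg_open W -> W (pg_inv x) ->
    exists U, [/\ pg_open U, U x & forall u, U u -> W (pg_inv u)];
  pg_hausdorff : forall x y, x <> y ->
    exists U V, [/\ pg_open U, pg_open V, U x, V y &
                    forall z, ~ (U z /\ V z)];
  pg_base : forall W x, pg_open W -> W x ->
    exists (H : pg_sort -> Prop) (y : pg_sort),
      [/\ H pg_one, (forall a b, H a -> H b -> H (pg_mul a b)),
          (forall a, H a -> H (pg_inv a)) &
          (let L := fun z => exists h, H h /\ z = pg_mul y h in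
           let R := fun z => exists h, H h /\ z = pg_mul h y in
           (pg_open L /\ L x /\ forall z, L z -> W z) \/
           (pg_open R /\ R x /\ forall z, R z -> W z))]
}.

Arguments pg_mul {p}.
Arguments pg_one {p}.
Arguments pg_inv {p}.
Arguments pg_open {p}.

Definition is_subgroup (G : permGroup) (H : G -> Prop) :=
  [/\ H pg_one, (forall a b, H a -> H b -> H (pg_mul a b)) &
      (forall a, H a -> H (pg_inv a))].

Definition finite_index (G : permGroup) (H : G -> Prop) :=
  exists l : list G, forall g : G, exists r, List.In r l /\ H (pg_mul (pg_inv r) g).

Definition no_proper_open_finite_index (G : permGroup) :=
  forall H : G -> Prop, is_subgroup H -> pg_open H -> finite_index H ->
    forall g, H g.

(* (g (h x) = (gh) x, matching (a[g])(b[h]) = a b^g [gh].)                  *)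
(* Bijectivity of each act g follows from the action axioms.                *)
Record GField (G : permGroup) := GFieldPack {
  gf_sort :> fieldType;
  gf_act : G -> gf_sort -> gf_sort;
  gf_actD : forall g x y, gf_act g (x + y) = gf_act g x + gf_act g y;
  gf_actM : forall g x y, gf_act g (x * y) = gf_act g x * gf_act g y;
  gf_act1r : forall g, gf_act g 1 = 1;
  gf_act1 : forall x, gf_act pg_one x = x;
  gf_actMg : forall g h x, gf_act (pg_mul g h) x = gf_act g (gf_act h x)
}.
Arguments gf_act {G}.

Definition smoothGF (G : permGroup) (K : GField G) :=
  forall x : K, pg_open (fun g => gf_act K g x = x).

Section Cohomology.
Variables (G : permGroup) (K : GField G) (n : nat).
Local Notation act := (gf_act K).
Local Notation mul := (@pg_mul G).

(* continuity into a discrete space = local constancy *)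
Definition loc_const1 (T : Type) (f : G -> T) :=
  forall g, exists U, [/\ pg_open U, U g & forall u, U u -> f u = f g].
Definition loc_const2 (T : Type) (f : G -> G -> T) :=
  forall g h, exists U V, [/\ pg_open U, pg_open V, U g, V h &
                             forall u v, U u -> V v -> f u v = f g h].

Definition unitsK : K -> Prop := fun x => x != 0.
Definition mu_n : K -> Prop := fun x => x ^+ n = 1.

Definition cocycle1 (P : K -> Prop) (c : G -> K) :=
  [/\ loc_const1 c, (forall g, P (c g)) &
      forall g h, c (mul g h) = c g * act g (c h)].
Definition cohom1 (P : K -> Prop) (c c' : G -> K) :=
  exists b, P b /\ forall g, c' g = c g * (act g b / b).
Definition cobound1 (P : K -> Prop) (c : G -> K) := cohom1 P (fun _ => 1) c.

Definition cocycle2 (P : K -> Prop) (z : G -> G -> K) :=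
  [/\ loc_const2 z, (forall g h, P (z g h)) &
      forall g h l, act g (z h l) * z g (mul h l) = z (mul g h) l * z g h].
Definition cohom2 (P : K -> Prop) (z z' : G -> G -> K) :=
  exists e : G -> K, [/\ loc_const1 e, (forall g, P (e g)) &
     forall g h, z' g h = z g h * (e g * act g (e h) / e (mul g h))].
Definition cobound2 (P : K -> Prop) (z : G -> G -> K) :=
  cohom2 P (fun _ _ => 1) z.

(* representatives of nPic_K(G) = n-torsion of H^1_cont(G, K^x) *)
Definition npic (c : G -> K) :=
  cocycle1 unitsK c /\ cobound1 unitsK (fun g => c g ^+ n).

(* representatives of (K^x / K^xn)^G *)
Definition ginv_class (a : K) :=
  a != 0 /\ forall g, exists d : K, d != 0 /\ act g a = a * d ^+ n.

(* equality in (K^x/K^xn)^G / k^x, where k = K^G *)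
Definition qeq (a a' : K) :=
  exists t d : K, [/\ t != 0, (forall g, act g t = t), d != 0 &
                     a' = a * t * d ^+ n].

(* the natural map nPic -> (K^x/K^xn)^G/k^x on representatives:
   [c] |-> [a] where c(g)^n = g(a)/a *)
Definition kummer_map (c : G -> K) (a : K) :=
  a != 0 /\ forall g, c g ^+ n = act g a / a.

(* the natural map (K^x/K^xn)^G/k^x -> H^2(G, mu_n) on representatives:
   [a] |-> [(g,h) |-> e(g) g(e(h)) / e(gh)], e continuous, e(g)^n = g(a)/a *)
Definition obstruction_map (a : K) (z : G -> G -> K) :=
  exists e : G -> K, [/\ loc_const1 e, (forall g, e g != 0),
     (forall g, e g ^+ n = act g a / a) &
     forall g h, z g h = e g * act g (e h) / e (mul g h)].

Definition kummer_exact_sequence :=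
  (* first map: inclusion of mu_n-cocycles; well defined *)
  (forall c, cocycle1 mu_n c -> npic c) /\
      (forall c c', cohom1 mu_n c c' -> cohom1 unitsK c c') /\
  (* second map: well defined, total, homomorphism *)
      (forall c, npic c -> exists a, kummer_map c a) /\
      (forall c a, npic c -> kummer_map c a -> ginv_class a) /\
      (forall c c' a a', npic c -> npic c' -> cohom1 unitsK c c' ->
          kummer_map c a -> kummer_map c' a' -> qeq a a') /\
      (forall c c' a a', kummer_map c a -> kummer_map c' a' ->
          kummer_map (fun g => c g * c' g) (a * a')) /\
  (* third map: well defined, total, homomorphism *)
      (forall a, ginv_class a -> exists z, obstruction_map a z /\ cocycle2 mu_n z) /\
      (forall a a' z z', ginv_class a -> ginv_class a' -> qeq a a' ->
          obstruction_map a z -> obstruction_map a' z' -> cohom2 mu_n z z') /\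
      (forall a a' z z', obstruction_map a z -> obstruction_map a' z' ->
          obstruction_map (a * a') (fun g h => z g h * z' g h)) /\
  (* exactness at nPic *)
      (forall c a, npic c -> kummer_map c a ->
          (qeq 1 a <-> exists c0, cocycle1 mu_n c0 /\ cohom1 unitsK c0 c)) /\
  (* exactness at (K^x/K^xn)^G/k^x *)
      (forall a z, ginv_class a -> obstruction_map a z ->
          (cobound2 mu_n z <->
           exists c a', [/\ npic c, kummer_map c a' & qeq a' a])).

End Cohomology.

(* Invertible objects of Sm_K(G): one-dimensional K-spaces with a smooth    *)
(* semilinear G-action (= smooth left K<G>-modules).                        *)
Section Modules.
Variables (G : permGroup) (K : GField G).
Local Notation act := (gf_act K).

Definition smooth_module (V : lmodType K) (actV : G -> V -> V) :=
  [/\ (forall g u v, actV g (u + v) = actV g u + actV g v),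
      (forall g (x : K) v, actV g (x *: v) = act g x *: actV g v),
      (forall v, actV pg_one v = v),
      (forall g h v, actV (pg_mul g h) v = actV g (actV h v)) &
      (forall v, pg_open (fun g => actV g v = v))].

Definition one_dimensional (V : lmodType K) :=
  exists v : V, v != 0 /\ forall w : V, exists x : K, w = x *: v.

Definition invertible_object (V : lmodType K) (actV : G -> V -> V) :=
  smooth_module actV /\ one_dimensional V.

(* The class of V in Pic_K(G) = H^1_cont(G,K^x) is the cocycle c given by
   g v = c(g) v for a basis v; V has order n in Pic_K(G). *)
Definition pic_order (V : lmodType K) (actV : G -> V -> V) (n : nat) :=
  exists (v : V) (c : G -> K),
    [/\ v != 0, (forall w : V, exists x : K, w = x *: v),
        (forall g, actV g v = c g *: v),
        (0 < n)%N /\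
        cobound1 (@unitsK G K) (fun g => c g ^+ n) &
        forall m, (0 < m < n)%N -> ~ cobound1 (@unitsK G K) (fun g => c g ^+ m)].

Definition contained_in_kummer_ext (n : nat) (a : K)
    (V : lmodType K) (actV : G -> V -> V) :=
  exists (F : GField G) (iota : {rmorphism K -> F}) (alpha : F),
    [/\ smoothGF F,
        (forall g (x : K), gf_act F g (iota x) = iota (act g x)),
        alpha ^+ n = iota a,
        (forall y : F, exists p : {poly K}, y = (map_poly iota p).[alpha]) &
        exists phi : V -> F,
          [/\ (forall u v, phi (u + v) = phi u + phi v),
              (forall (x : K) v, phi (x *: v) = iota x * phi v),
              injective phi &
              forall g v, phi (actV g v) = gf_act F g (phi v)]].

End Modules.

(* Main.v *)
Require Import Defs.
From HB Require Import structures.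
From mathcomp Require Import all_boot all_algebra all_field.
From mathcomp Require Import ring zify.
From Stdlib Require Import ClassicalEpsilon FunctionalExtensionality PropExtensionality Classical.
Import GRing.Theory.
Local Open Scope ring_scope.
Set Implicit Arguments. Unset Strict Implicit.

Fact gact_zmod (G : permGroup) (K : GField G) (g : G) : zmod_morphism (gf_act K g).
Proof.
move=> x y; have h0 : gf_act K g 0 = 0.
  by apply: (addrI (gf_act K g 0)); rewrite -gf_actD !addr0.
have hN : gf_act K g (- y) = - gf_act K g y.
  by apply: (addrI (gf_act K g y)); rewrite -gf_actD !subrr.
by rewrite gf_actD hN.
Qed.
HB.instance Definition _ (G : permGroup) (K : GField G) (g : G) :=
  GRing.isZmodMorphism.Build K K (gf_act K g) (@gact_zmod G K g).
Fact gact_monoid (G : permGroup) (K : GField G) (g : G) : monoid_morphism (gf_act K g).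
Proof. by split; [exact: gf_act1r | move=> x y; exact: gf_actM]. Qed.
HB.instance Definition _ (G : permGroup) (K : GField G) (g : G) :=
  GRing.isMonoidMorphism.Build K K (gf_act K g) (@gact_monoid G K g).

Section Group.
Variable G : permGroup.
Local Notation mul := (@pg_mul G).
Local Notation one := (@pg_one G).
Local Notation inv := (@pg_inv G).

Lemma pg_mulgV (x : G) : mul x (inv x) = one.
Proof.
set y := mul x (inv x).
have yy : mul y y = y.
  by rewrite /y -[LHS]pg_mulA (pg_mulA (inv x)) pg_mulV pg_mul1.
transitivity (mul (inv y) (mul y y)); first by rewrite pg_mulA pg_mulV pg_mul1.
by rewrite yy pg_mulV.
Qed.

Lemma pg_mulg1 (x : G) : mul x one = x.
Proof. by rewrite -(pg_mulV x) pg_mulA pg_mulgV pg_mul1. Qed.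

Lemma pg_mulKV (x y : G) : mul x (mul (inv x) y) = y.
Proof. by rewrite pg_mulA pg_mulgV pg_mul1. Qed.

Lemma pg_mulK (x y : G) : mul (inv x) (mul x y) = y.
Proof. by rewrite pg_mulA pg_mulV pg_mul1. Qed.

Definition nbhd (P : G -> Prop) (g : G) :=
  exists U, [/\ pg_open U, U g & forall u, U u -> P u].

Lemma nbhd_and P Q g : nbhd P g -> nbhd Q g -> nbhd (fun u => P u /\ Q u) g.
Proof.
move=> [U [oU Ug PU]] [V [oV Vg QV]].
exists (fun x => U x /\ V x); split => //; first exact: pg_open_inter.
by move=> u [/PU ? /QV ?].
Qed.

Lemma nbhdT (P : G -> Prop) g : (forall u, P u) -> nbhd P g.
Proof. by move=> HP; exists (fun _ => True); split => //; exact: pg_open_setT. Qed.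

Lemma open_nbhd (P : G -> Prop) : (forall g, P g -> nbhd P g) -> pg_open P.
Proof.
move=> HP.
pose I := {U : G -> Prop | pg_open U /\ forall u, U u -> P u}.
have -> : P = (fun x => exists i : I, proj1_sig i x).
  apply: functional_extensionality => x; apply: propositional_extensionality.
  split; last by move=> [[U [_ PU]] /= /PU].
  move=> /HP [U [oU Ux PU]].
  by exists (exist _ U (conj oU PU)).
apply: pg_open_union => -[U [oU _]] //.
Qed.

Lemma lc1_nbhd T (f : G -> T) : loc_const1 f <-> forall g, nbhd (fun u => f u = f g) g.
Proof. by []. Qed.

Lemma lc1_op T1 T2 T3 (op : T1 -> T2 -> T3) f1 f2 :
  loc_const1 f1 -> loc_const1 f2 -> loc_const1 (fun g : G => op (f1 g) (f2 g)).
Proof.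
move=> h1 h2 g; have [U [oU Ug HU]] := nbhd_and (h1 g) (h2 g).
by exists U; split => // u /HU [-> ->].
Qed.

Lemma lc1_map T1 T2 (F : T1 -> T2) f :
  loc_const1 f -> loc_const1 (fun g : G => F (f g)).
Proof. by move=> h g; have [U [oU Ug HU]] := h g; exists U; split => // u /HU ->. Qed.

Lemma lc1_cst T (t : T) : loc_const1 (fun _ : G => t).
Proof. by move=> g; apply: nbhdT. Qed.

Lemma orbit_lc T (A : G -> T -> T) (t : T) :
  (forall x, A one x = x) -> (forall g h x, A (mul g h) x = A g (A h x)) ->
  pg_open (fun g => A g t = t) -> loc_const1 (fun g => A g t).
Proof.
move=> A1 AM oS h.
have [|U [V [oU oV Uh Vh UV]]] := @pg_mul_cont G _ (inv h) h oS; first by rewrite pg_mulV A1.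
exists V; split => // v /(UV _ _ Uh) E.
by rewrite -(pg_mulKV h v) AM E.
Qed.

Lemma lc2_op T1 T2 T3 (op : T1 -> T2 -> T3) f1 f2 :
  loc_const2 f1 -> loc_const2 f2 -> loc_const2 (fun g h : G => op (f1 g h) (f2 g h)).
Proof.
move=> h1 h2 g h.
have [U1 [V1 [oU1 oV1 U1g V1h E1]]] := h1 g h.
have [U2 [V2 [oU2 oV2 U2g V2h E2]]] := h2 g h.
exists (fun x => U1 x /\ U2 x), (fun x => V1 x /\ V2 x); split => //; try exact: pg_open_inter.
by move=> u v [? ?] [? ?]; rewrite E1 // E2.
Qed.

Lemma lc2_l T (f : G -> T) : loc_const1 f -> loc_const2 (fun g h => f g).
Proof.
move=> hf g h; have [U [oU Ug E]] := hf g.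
exists U, (fun _ => True); split => //; first exact: pg_open_setT.
by move=> u v /E.
Qed.

Lemma lc2_mul T (f : G -> T) : loc_const1 f -> loc_const2 (fun g h => f (mul g h)).
Proof.
move=> hf g h; have [W [oW Wg E]] := hf (mul g h).
have [U [V [oU oV Ug Vh UV]]] := pg_mul_cont oW Wg.
by exists U, V; split => // u v Uu Vv; rewrite E //; apply: UV.
Qed.

End Group.

Section Part1.
Variables (G : permGroup) (K : GField G) (n : nat).
Hypothesis smK : smoothGF K.
Hypothesis n_gt0 : (0 < n)%N.
Local Notation act := (gf_act K).
Local Notation mul := (@pg_mul G).

Lemma actM g (x y : K) : act g (x * y) = act g x * act g y.
Proof. exact: gf_actM. Qed.
Lemma actV g (x : K) : act g x^-1 = (act g x)^-1.
Proof. exact: fmorphV. Qed.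
Lemma act_div g (x y : K) : act g (x / y) = act g x / act g y.
Proof. exact: fmorph_div. Qed.
Lemma actX g (x : K) m : act g (x ^+ m) = act g x ^+ m.
Proof. exact: rmorphXn. Qed.
Lemma act_eq0 g (x : K) : (act g x == 0) = (x == 0).
Proof. exact: fmorph_eq0. Qed.

Lemma act1K g : act g 1 = 1 :> K.
Proof. exact: gf_act1r. Qed.

Lemma act_lc (x : K) : loc_const1 (fun g => act g x).
Proof. apply: orbit_lc => //; [exact: gf_act1 | exact: gf_actMg]. Qed.

Lemma lc2_act (e : G -> K) : loc_const1 e -> loc_const2 (fun g h => act g (e h)).
Proof.
move=> he g h; have [V [oV Vh E]] := he h.
have [U [oU Ug E']] := act_lc (e h) g.
by exists U, V; split => // u v Uu Vv; rewrite E // E'.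
Qed.

Definition delta (e : G -> K) g h := e g * act g (e h) / e (mul g h).
Definition cocy (c : G -> K) := forall g h, c (mul g h) = c g * act g (c h).
Definition nz (e : G -> K) := forall g, e g != 0.
Ltac nzt := repeat (apply: mulf_neq0 || rewrite invr_eq0 || apply: expf_neq0 || rewrite act_eq0 || rewrite fmorph_eq0 || assumption || match goal with H : nz _ |- _ => exact: (H _) | H : forall _, _ != 0 |- _ => exact: (H _) end).

Ltac fside := repeat (apply/andP; split); nzt.

Lemma delta_lc e : loc_const1 e -> loc_const2 (delta e).
Proof.
move=> he; rewrite /delta.
apply: (lc2_op (fun x y => x / y)); last exact: lc2_mul.
by apply: (lc2_op (fun x y => x * y)); [exact: lc2_l | exact: lc2_act].
Qed.

Lemma delta_cocycle e : nz e -> forall g h l,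
  act g (delta e h l) * delta e g (mul h l) = delta e (mul g h) l * delta e g h.
Proof.
move=> ne g h l; rewrite /delta !act_div !actM -gf_actMg pg_mulA.
have := ne (mul (mul g h) l); have := ne (mul g h); have := ne g.
have : act g (e (mul h l)) != 0 by rewrite act_eq0.
move=> h1 h2 h3 h4. field; fside.
Qed.


Lemma mu_nz (x : K) : x ^+ n = 1 -> x != 0.
Proof. by move=> h; apply/eqP => x0; move: h; rewrite x0 expr0n gtn_eqF // => /eqP; rewrite eq_sym oner_eq0. Qed.

Lemma delta_mul e f : nz e -> nz f -> forall g h,
  delta (fun x => e x * f x) g h = delta e g h * delta f g h.
Proof.
move=> ne nf g h; rewrite /delta actM.
have := ne (mul g h); have := nf (mul g h) => h1 h2. field; fside.
Qed.

Lemma delta_div e f : nz e -> nz f -> forall g h,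
  delta (fun x => e x / f x) g h = delta e g h / delta f g h.
Proof.
move=> ne nf g h; rewrite /delta act_div.
have := ne (mul g h); have := nf (mul g h); have := nf g.
have : act g (f h) != 0 by rewrite act_eq0.
move=> h1 h2 h3 h4. field; fside.
Qed.

Lemma delta_cocy c : nz c -> cocy c -> forall g h, delta c g h = 1.
Proof.
move=> nc cc g h; rewrite /delta cc divff //; rewrite -cc; exact: nc.
Qed.

Lemma cocy_delta c : nz c -> (forall g h, delta c g h = 1) -> cocy c.
Proof.
move=> nc dc g h; have := dc g h; rewrite /delta => /divr1_eq ->. done.
Qed.

Lemma cocy_cob d : d != 0 -> cocy (fun g => act g d / d).
Proof.
move=> d0 g h; rewrite act_div gf_actMg.
have : act g d != 0 by rewrite act_eq0.
move=> h1. field; fside.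
Qed.

Lemma nz_cob d : d != 0 -> nz (fun g => act g d / d).
Proof. by move=> d0 g; rewrite mulf_neq0 ?invr_eq0 ?act_eq0. Qed.

Lemma lc_cob d : loc_const1 (fun g => act g d / d).
Proof. exact: (lc1_map (fun x => x / d) (act_lc d)). Qed.

Lemma cocy_mul c c' : cocy c -> cocy c' -> cocy (fun g => c g * c' g).
Proof. by move=> h h' g l; rewrite h h' actM; ring. Qed.

Lemma cocy_div c c' : nz c' -> cocy c -> cocy c' -> cocy (fun g => c g / c' g).
Proof.
move=> nc h h' g l; rewrite h h' act_div.
have := nc g; have : act g (c' l) != 0 by rewrite act_eq0.
move=> h1 h2; field; fside.
Qed.


Local Notation MU := (@mu_n G K n).
Local Notation UN := (@unitsK G K).

Lemma nz_mul e f : nz e -> nz f -> nz (fun g => e g * f g).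
Proof. by move=> h1 h2 g; rewrite mulf_neq0. Qed.
Lemma nz_div e f : nz e -> nz f -> nz (fun g => e g / f g).
Proof. by move=> h1 h2 g; rewrite mulf_neq0 ?invr_eq0. Qed.
Lemma delta_nz e : nz e -> forall g h, delta e g h != 0.
Proof. by move=> h g l; rewrite /delta !mulf_neq0 ?invr_eq0 ?act_eq0. Qed.

Lemma kummer_act (c : G -> K) (a : K) g : kummer_map n c a -> act g a = c g ^+ n * a.
Proof. by move=> [a0 E]; rewrite E divfK. Qed.

Lemma obs_nz (a : K) (z : G -> G -> K) : obstruction_map n a z -> a != 0.
Proof.
move=> [e [_ ne En _]]; apply/eqP => a0.
have := expf_neq0 n (ne pg_one); rewrite En a0 raddf0 mul0r eqxx //.
Qed.

Lemma it1 (c : G -> K) : cocycle1 MU c -> npic n c.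
Proof.
case=> lc mu co; split; first by split => // g; exact: (mu_nz (mu g)).
exists 1; split; first exact: oner_neq0.
by move=> g; rewrite mu act1K divr1 mul1r.
Qed.

Lemma it2 (c c' : G -> K) : cohom1 MU c c' -> cohom1 UN c c'.
Proof. by move=> [b [mb E]]; exists b; split => //; apply: mu_nz. Qed.

Lemma it3 (c : G -> K) : npic n c -> exists a, kummer_map n c a.
Proof. by move=> [_ [b [nb E]]]; exists b; split => // g; rewrite E mul1r. Qed.

Lemma it4 (c : G -> K) (a : K) : npic n c -> kummer_map n c a -> ginv_class n a.
Proof.
move=> [[_ nc _] _] [a0 E]; split => // g; exists (c g); split; first exact: nc.
by rewrite E; field.
Qed.

Lemma it5 (c c' : G -> K) (a a' : K) : npic n c -> npic n c' -> cohom1 UN c c' ->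
  kummer_map n c a -> kummer_map n c' a' -> qeq n a a'.
Proof.
move=> [[_ nc _] _] _ [b [nb E]] ka ka'.
move: nb nc; rewrite /unitsK => nb nc.
have a0 := ka.1; have a'0 := ka'.1.
exists (a' / (a * b ^+ n)), b; split => //.
- by nzt.
- move=> g; rewrite act_div actM actX (kummer_act g ka) (kummer_act g ka') E exprMn.
  have := nc g; have : act g b != 0 by rewrite act_eq0.
  move=> h1 h2; rewrite expr_div_n. field; fside.
- field; fside.
Qed.

Lemma it6 (c c' : G -> K) (a a' : K) : kummer_map n c a -> kummer_map n c' a' ->
  kummer_map n (fun g => c g * c' g) (a * a').
Proof.
move=> [a0 E] [a'0 E']; split; first by rewrite mulf_neq0.
by move=> g; rewrite exprMn E E' actM; field; fside.
Qed.

Lemma it7 (a : K) : ginv_class n a -> exists z, obstruction_map n a z /\ cocycle2 MU z.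
Proof.
move=> [a0 Ha].
pose ee g := epsilon (inhabits 1) (fun d : K => d != 0 /\ act g a = a * d ^+ n).
have eeP g : ee g != 0 /\ act g a = a * ee g ^+ n.
  by apply: (epsilon_spec (inhabits 1) (fun d : K => d != 0 /\ act g a = a * d ^+ n)); apply: Ha.
have lce : loc_const1 ee.
  move=> g; have [U [oU Ug E]] := act_lc a g.
  by exists U; split => // u /E Eu; rewrite /ee Eu.
have En g : ee g ^+ n = act g a / a by rewrite (eeP g).2; field.
have nee : nz ee by move=> g; exact: (eeP g).1.
exists (delta ee); split; first by exists ee; split.
split; [exact: delta_lc | | exact: delta_cocycle].
move=> g h; rewrite /MU /mu_n /delta !exprMn exprVn -actX !En act_div -gf_actMg.
have : act g a != 0 by rewrite act_eq0.
have : act (mul g h) a != 0 by rewrite act_eq0.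
move=> h1 h2; field; fside.
Qed.

Lemma it8 (a a' : K) (z z' : G -> G -> K) : ginv_class n a -> ginv_class n a' -> qeq n a a' ->
  obstruction_map n a z -> obstruction_map n a' z' -> cohom2 MU z z'.
Proof.
move=> _ _ [t [d [t0 tinv d0 Ea]]] oz oz'.
have a0 := obs_nz oz.
move: oz oz' => [e [lce ne En Z]] [e' [lce' ne' En' Z']].
pose f g := e' g / (e g * (act g d / d)).
have nk := nz_cob d0.
exists f; split.
- apply: (lc1_op (fun x y => x / y)) => //.
  by apply: (lc1_op (fun x y => x * y)) => //; apply: lc_cob.
- move=> g; rewrite /MU /mu_n /f expr_div_n exprMn En En' Ea expr_div_n -actX !actM tinv.
  have : act g a != 0 by rewrite act_eq0.
  have : act g (d ^+ n) != 0 by rewrite act_eq0 expf_neq0.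
  move=> h1 h2; field; fside.
- move=> g h; rewrite Z Z'.
  have D : delta f g h = delta e' g h / (delta e g h * 1).
    rewrite /f delta_div //; last exact: nz_mul.
    by rewrite delta_mul // (delta_cocy nk (cocy_cob d0)).
  rewrite -/(delta e' g h) -/(delta e g h) -/(delta f g h) D.
  have := delta_nz ne g h => h1; field. fside. all: exact: ne.
Qed.

Lemma it9 (a a' : K) (z z' : G -> G -> K) : obstruction_map n a z -> obstruction_map n a' z' ->
  obstruction_map n (a * a') (fun g h => z g h * z' g h).
Proof.
move=> oz oz'; have a0 := obs_nz oz; have a'0 := obs_nz oz'.
move: oz oz' => [e [lce ne En Z]] [e' [lce' ne' En' Z']].
exists (fun g => e g * e' g); split.
- exact: lc1_op.
- exact: nz_mul.
- by move=> g; rewrite exprMn En En' actM; field; fside.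
- move=> g h; rewrite Z Z' -/(delta e g h) -/(delta e' g h) -delta_mul //.
Qed.

Lemma it10 (c : G -> K) (a : K) : npic n c -> kummer_map n c a ->
  (qeq n 1 a <-> exists c0, cocycle1 MU c0 /\ cohom1 UN c0 c).
Proof.
move=> [[lcc ncc coc] _] ka; have a0 := ka.1.
move: ncc; rewrite /unitsK => ncc; split.
- move=> [t [d [t0 tinv d0 Ea]]].
  have nk := nz_cob d0.
  exists (fun g => c g / (act g d / d)); split; first split.
  + by apply: (lc1_op (fun x y => x / y)) => //; apply: lc_cob.
  + move=> g; rewrite /MU /mu_n expr_div_n (ka.2 g) Ea expr_div_n -actX !actM tinv act1K.
    have : act g (d ^+ n) != 0 by rewrite act_eq0 expf_neq0.
    have := ncc g.
    move=> h1 h2; field; fside.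
  + by apply: cocy_div => //; apply: cocy_cob.
  + exists d; split => // g; have := nk g => h1; field; fside.
- move=> [c0 [[lc0 mu0 co0] [b [nb E]]]].
  move: nb; rewrite /unitsK => nb.
  exists (a / b ^+ n), b; split => //.
  + by rewrite mulf_neq0 ?invr_eq0 ?expf_neq0.
  + move=> g; rewrite act_div actX (kummer_act g ka) E exprMn mu0.
    have : act g b != 0 by rewrite act_eq0.
    move=> h1; rewrite expr_div_n; field; fside.
  + field; fside.
Qed.

Lemma it11 (a : K) (z : G -> G -> K) : ginv_class n a -> obstruction_map n a z ->
  (cobound2 MU z <-> exists c a', [/\ npic n c, kummer_map n c a' & qeq n a' a]).
Proof.
move=> _ oz; have a0 := obs_nz oz.
move: oz => [e [lce ne En Z]]; split.
- move=> [f [lcf muf Ef]].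
  have nf : nz f by move=> g; exact: (mu_nz (muf g)).
  have Dc g h : delta (fun x => e x / f x) g h = 1.
    rewrite delta_div //.
    have -> : delta f g h = z g h by rewrite (Ef g h) mul1r.
    have -> : delta e g h = z g h by rewrite Z.
    apply: divff; rewrite Z; exact: delta_nz.
  have cn g : (e g / f g) ^+ n = act g a / a by rewrite expr_div_n En muf divr1.
  exists (fun g => e g / f g), a; split.
  + split; first split.
    * by apply: (lc1_op (fun x y => x / y)).
    * exact: nz_div.
    * by apply: cocy_delta; [exact: nz_div | exact: Dc].
    * by exists a; split => // g; rewrite mul1r cn.
  + by split.
  + exists 1, 1; split => //; [exact: oner_neq0 | exact: act1K | exact: oner_neq0 | by rewrite expr1n !mulr1].
- move=> [c [a' [[[lcc ncc coc] _] ka' [t [d [t0 tinv d0 Ea]]]]]].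
  move: ncc; rewrite /unitsK => ncc.
  have nk := nz_cob d0.
  pose f g := e g / (c g * (act g d / d)).
  exists f; split.
  + apply: (lc1_op (fun x y => x / y)) => //.
    by apply: (lc1_op (fun x y => x * y)) => //; apply: lc_cob.
  + move=> g; have a'0 := ka'.1.
    rewrite /MU /mu_n /f expr_div_n exprMn En (ka'.2 g) Ea expr_div_n -actX !actM tinv.
    have : act g (d ^+ n) != 0 by rewrite act_eq0 expf_neq0.
    have := ncc g.
    move=> h1 h2; field; fside.
  + move=> g h; rewrite Z mul1r.
    have D : delta f g h = delta e g h / (1 * 1).
      rewrite /f delta_div //; last exact: nz_mul.
      by rewrite delta_mul // (delta_cocy nk (cocy_cob d0)) (delta_cocy ncc coc).
    by rewrite -/(delta e g h) -/(delta f g h) D !mulr1 divr1.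
Qed.

Lemma part1 : kummer_exact_sequence K n.
Proof.
split; first exact: it1.
split; first exact: it2.
split; first exact: it3.
split; first exact: it4.
split; first exact: it5.
split; first exact: it6.
split; first exact: it7.
split; first exact: it8.
split; first exact: it9.
split; first exact: it10.
exact: it11.
Qed.

End Part1.

Section Finite.
Variable K : fieldType.

Lemma irr_exists (p : {poly K}) : (1 < size p)%N -> exists q, irreducible_poly q /\ q %| p.
Proof.
have : (size p <= size p)%N by [].
move: {2}(size p) => m; elim: m p => [|m IH] p.
  by rewrite leqn0 => /eqP ->.
move=> le sp.
case: (classic (irreducible_poly p)) => [ip|nip]; first by exists p; split => //; exact: dvdpp.
have [d [d1 [dp ndp]]] : exists d : {poly K}, size d != 1%N /\ d %| p /\ ~~ (d %= p).
  apply: NNPP => H; apply: nip; split => // d d1 dp.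
  apply: negbNE; apply/negP => nd; apply: H; exists d; split => //; split => //; exact/negP.
have p0 : p != 0 by rewrite -size_poly_gt0 (ltn_trans _ sp).
have d0 : d != 0 by apply/eqP => d0; move: dp; rewrite d0 dvd0p (negPf p0).
have lt : (size d < size p)%N.
  rewrite ltn_neqAle dvdp_leq // andbT; apply/negP => /eqP e.
  by move: ndp; rewrite -dvdp_size_eqp // e eqxx.
have ledm : (size d <= m)%N by rewrite -ltnS (leq_trans lt le).
have d1' : (1 < size d)%N.
  by move: d1 d0; rewrite -size_poly_gt0; case: (size d) => [|[|]].
have [q [iq qd]] := IH d ledm d1'.
by exists q; split => //; exact: dvdp_trans dp.
Qed.

Lemma irr_fin (p : {poly K}) : p != 0 ->
  exists L : list {poly K}, forall q, irreducible_poly q -> q %| p ->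
    exists f, List.In f L /\ q %= f.
Proof.
have : (size p <= size p)%N by [].
move: {2}(size p) => m; elim: m p => [|m IH] p.
  by rewrite leqn0 size_poly_eq0 => ->.
move=> le p0.
case: (classic (exists q0, irreducible_poly q0 /\ q0 %| p)); last first.
  move=> nq; exists nil => q iq qp; exfalso; apply: nq; exists q; split => //.
move=> [q0 [iq0 /dvdpP [r pr]]].
have q00 := irredp_neq0 iq0.
have r0 : r != 0 by apply/eqP => r0; move: p0; rewrite pr r0 mul0r eqxx.
have ler : (size r <= m)%N.
  have : (size r < size p)%N.
    have := iq0.1; rewrite pr size_mul //; move: (size r) (size q0) => a b; lia.
  by move=> h; rewrite -ltnS (leq_trans h le).
have [L HL] := IH r ler r0.
exists (q0 :: L) => q iq qp.
case: (boolP (q %| q0)) => qq0.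
  exists q0; split; first by left.
  by apply: iq0.2 => //; move: iq.1; case: (size q) => [|[|]].
have cq : coprimep q q0 by rewrite irreducible_poly_coprime.
move: qp; rewrite pr mulrC Gauss_dvdpr // => qr.
have [f [Lf qf]] := HL q iq qr.
by exists f; split => //; right.
Qed.

End Finite.

Section TrPoly.
Variables (G : permGroup) (K : GField G) (c : G -> K).
Hypothesis nc : forall g, c g != 0.
Hypothesis cc : forall g h, c (pg_mul g h) = c g * gf_act K g (c h).
Hypothesis c1 : c pg_one = 1.
Local Notation act := (gf_act K).
Local Notation mul := (@pg_mul G).

Definition tr g (p : {poly K}) : {poly K} := map_poly (act g) p \Po (c g *: 'X).

Lemma trD g p q : tr g (p + q) = tr g p + tr g q.
Proof. by rewrite /tr rmorphD comp_polyD. Qed.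
Lemma trB g p q : tr g (p - q) = tr g p - tr g q.
Proof. by rewrite /tr rmorphB comp_polyB. Qed.
Lemma trM g p q : tr g (p * q) = tr g p * tr g q.
Proof. by rewrite /tr rmorphM comp_polyM. Qed.
Lemma trC g x : tr g x%:P = (act g x)%:P.
Proof. by rewrite /tr map_polyC comp_polyC. Qed.
Lemma tr1 g : tr g 1 = 1.
Proof. by rewrite -polyC1 trC act1K. Qed.
Lemma trX g : tr g 'X = c g *: 'X.
Proof. by rewrite /tr map_polyX comp_polyX. Qed.
Lemma trZ g x p : tr g (x *: p) = act g x *: tr g p.
Proof. by rewrite -!mul_polyC trM trC. Qed.
Lemma trXn g m : tr g ('X^m) = c g ^+ m *: 'X^m.
Proof.
elim: m => [|m IH]; first by rewrite !expr0 tr1 scale1r.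
by rewrite !exprS trM IH trX -scalerAl -scalerAr scalerA.
Qed.

Lemma tr_comp g h p : tr (mul g h) p = tr g (tr h p).
Proof.
rewrite /tr (map_comp_poly (act g)) map_polyZ map_polyX -comp_polyA comp_polyZ comp_polyX.
rewrite scalerA cc mulrC; congr (_ \Po _).
rewrite -map_poly_comp; apply: eq_map_poly => x /=; exact: gf_actMg.
Qed.

Lemma tr_one p : tr pg_one p = p.
Proof.
rewrite /tr c1 scale1r comp_polyXr map_poly_id // => x _; exact: gf_act1.
Qed.

Lemma tr_invl g p : tr (pg_inv g) (tr g p) = p.
Proof. by rewrite -tr_comp pg_mulV tr_one. Qed.
Lemma tr_invr g p : tr g (tr (pg_inv g) p) = p.
Proof. by rewrite -tr_comp pg_mulgV tr_one. Qed.

Lemma size_tr g p : size (tr g p) = size p.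
Proof.
rewrite /tr size_comp_poly2 ?size_map_poly //.
by rewrite size_scale // size_polyX.
Qed.

Lemma tr_dvdp g p q : p %| q -> tr g p %| tr g q.
Proof. by move=> /dvdpP [r ->]; rewrite trM dvdp_mull. Qed.

Lemma tr_dvdpE g p q : (tr g p %| tr g q) = (p %| q).
Proof.
apply/idP/idP; last exact: tr_dvdp.
by move=> /(tr_dvdp (pg_inv g)); rewrite !tr_invl.
Qed.

Lemma tr_eqp g p q : (tr g p %= tr g q) = (p %= q).
Proof. by rewrite /eqp !tr_dvdpE. Qed.

Lemma tr_irr g q : irreducible_poly q -> irreducible_poly (tr g q).
Proof.
move=> [sq iq]; split; first by rewrite size_tr.
move=> d d1; rewrite -(tr_invr g d) tr_dvdpE tr_eqp; apply: iq.
by rewrite size_tr.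
Qed.

Lemma tr_lc (smK : smoothGF K) (lcc : loc_const1 c) p : loc_const1 (fun g => tr g p).
Proof.
have lm : forall s : seq K, loc_const1 (fun g => map (act g) s).
  elim=> [|x s IH]; first exact: lc1_cst.
  exact: (lc1_op (fun a b => a :: b) (act_lc smK x) IH).
have L := lc1_op (fun (s : seq K) (x : K) => Poly s \Po (x *: 'X)) (lm p) lcc.
move=> g; have [U [oU Ug E]] := L g; exists U; split => // u Uu.
rewrite /tr !map_polyE; exact: E.
Qed.

Lemma stable_all (smK : smoothGF K) (lcc : loc_const1 c)
  (noF : no_proper_open_finite_index G) (q P : {poly K}) :
  irreducible_poly q -> q %| P -> P != 0 ->
  (forall g, exists k, k != 0 /\ tr g P = k *: P) -> forall g, q %| tr g q.
Proof.
move=> iq qP P0 trP.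
pose H g := q %| tr g q.
apply: (noF H).
- split.
  + by rewrite /H tr_one dvdpp.
  + move=> a b Ha Hb; rewrite /H tr_comp; exact: dvdp_trans Ha (tr_dvdp a Hb).
  + move=> a Ha; have := tr_dvdp (pg_inv a) Ha; rewrite tr_invl => d.
    have E : tr (pg_inv a) q %= q by rewrite -dvdp_size_eqp // size_tr.
    by rewrite /H (eqp_dvdr _ E) dvdpp.
- apply: open_nbhd => h Hh.
  have [U [oU Uh E]] := tr_lc smK lcc q h.
  by exists U; split => // u /E; rewrite /H => ->.
- have [L HL] := irr_fin P0.
  pose pick f := epsilon (inhabits pg_one) (fun r => tr r q %= f).
  exists (map pick L) => g.
  have gqP : tr g q %| P.
    have [k [k0 Ek]] := trP g.
    by rewrite -(dvdpZr _ _ k0) -Ek tr_dvdp.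
  have [f [Lf gf]] := HL (tr g q) (tr_irr g iq) gqP.
  have pf : tr (pick f) q %= f.
    by apply: (epsilon_spec (inhabits pg_one) (fun r => tr r q %= f)); exists g.
  exists (pick f); split; first exact: List.in_map.
  rewrite eqp_sym in pf.
  have E : tr g q %= tr (pick f) q := eqp_trans gf pf.
  rewrite -(tr_eqp (pg_inv (pick f))) tr_invl in E.
  by rewrite /H tr_comp (eqp_dvdr _ E) dvdpp.
Qed.

End TrPoly.
Section FieldSec.
Import Pdiv.CommonRing.


Section FieldConstr.
Variables (G : permGroup) (K : GField G) (c : G -> K).
Hypothesis nc : forall g, c g != 0.
Hypothesis cc : forall g h, c (pg_mul g h) = c g * gf_act K g (c h).
Hypothesis c1 : c pg_one = 1.
Hypothesis lcc : loc_const1 c.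
Hypothesis smK : smoothGF K.
Variables (q : {poly K}) (qI : monic_irreducible_poly q).
Hypothesis stab : forall g, q %| tr c g q.
Local Notation act := (gf_act K).

Definition FF : fieldType := {poly %/ q with qI}.

Lemma mkq : mk_monic q = q.
Proof. exact: mk_monicE. Qed.

Lemma qmon : q \is monic.
Proof. exact: qI.2. Qed.

Lemma inq_dvd p : q %| p -> in_qpoly q p = 0.
Proof.
move=> /dvdpP [r ->]; apply: val_inj => /=.
by rewrite mkq Pdiv.RingMonic.rmodp_mull // qmon.
Qed.

Lemma inq_val (y : {poly %/ q}) : in_qpoly q (y : {poly K}) = y.
Proof. by apply: val_inj => /=; apply: in_qpoly_small; exact: size_mk_monic. Qed.

Lemma trmod g p : in_qpoly q (tr c g (rmodp p q)) = in_qpoly q (tr c g p).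
Proof.
rewrite [in RHS](Pdiv.RingMonic.rdivp_eq qmon p) trD trM !raddfD /= in_qpolyM.
by rewrite (inq_dvd (stab g)) mulr0 add0r.
Qed.

Lemma trmod' g p : in_qpoly q (tr c g (rmodp p (mk_monic q))) = in_qpoly q (tr c g p).
Proof. by rewrite mkq trmod. Qed.

Definition actF g (y : FF) : FF := in_qpoly q (tr c g (y : {poly %/ q})).

Lemma actF_D g (y z : FF) : actF g (y + z) = actF g y + actF g z.
Proof. by rewrite /actF -raddfD /= -trD. Qed.

Lemma actF_M g (y z : FF) : actF g (y * z) = actF g y * actF g z.
Proof.
rewrite /actF.
have -> : ((y * z : FF) : {poly K}) = rmodp ((y : {poly K}) * (z : {poly K})) (mk_monic q) by [].
by rewrite trmod' trM in_qpolyM.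
Qed.

Lemma actF_in g p : actF g (in_qpoly q p) = in_qpoly q (tr c g p).
Proof.
rewrite /actF.
have -> : ((in_qpoly q p : FF) : {poly K}) = rmodp p (mk_monic q) by [].
by rewrite trmod'.
Qed.

Lemma actF_1r g : actF g 1 = 1.
Proof.
have -> : (1 : FF) = in_qpoly q 1 by rewrite in_qpoly1.
by rewrite actF_in tr1 in_qpoly1.
Qed.

Lemma actF_1 (y : FF) : actF pg_one y = y.
Proof. by rewrite /actF tr_one // inq_val. Qed.

Lemma actF_Mg g h (y : FF) : actF (pg_mul g h) y = actF g (actF h y).
Proof.
by rewrite [actF h y]/actF actF_in /actF tr_comp.
Qed.

Definition FG : GField G := GFieldPack actF_D actF_M actF_1r actF_1 actF_Mg.

Lemma FG_smooth : smoothGF FG.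
Proof.
move=> y; apply: open_nbhd => h /= Hh.
have [U [oU Uh E]] := tr_lc smK lcc (y : {poly K}) h.
by exists U; split => // u /E Eu; rewrite /actF Eu.
Qed.



Definition iotaF (x : K) : FF := in_qpoly q x%:P.

Fact iotaF_zmod : zmod_morphism iotaF.
Proof. by move=> x y; rewrite /iotaF polyCB raddfB. Qed.
HB.instance Definition _ := GRing.isZmodMorphism.Build K FF iotaF iotaF_zmod.
Fact iotaF_monoid : monoid_morphism iotaF.
Proof. by split; rewrite /iotaF ?polyC1 ?in_qpoly1 // => x y; rewrite polyCM in_qpolyM. Qed.
HB.instance Definition _ := GRing.isMonoidMorphism.Build K FF iotaF iotaF_monoid.

Definition alphaF : FF := in_qpoly q 'X.

Lemma FG_iota g x : gf_act FG g (iotaF x) = iotaF (act g x).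
Proof. by rewrite /= /iotaF actF_in trC. Qed.

Lemma FG_gen (y : FG) : exists p : {poly K}, y = (map_poly iotaF p).[alphaF].
Proof.
exists (y : {poly K}).
have E : map_poly iotaF (y : {poly K}) = map_poly (qpolyC q) (y : {poly K}).
  apply: eq_map_poly => x; apply: val_inj => /=.
  apply: rmodp_small; rewrite size_polyC (leq_ltn_trans (leq_b1 _)) //.
  exact: size_mk_monic_gt1.
rewrite E /alphaF -in_qpoly_comp_horner comp_polyXr.
by rewrite inq_val.
Qed.

Lemma FG_alphaX (m : nat) (b : K) : q %| 'X^m - b%:P -> alphaF ^+ m = iotaF b.
Proof.
move=> qd; have := inq_dvd qd; rewrite raddfB /= => /eqP; rewrite subr_eq0 => /eqP E.
rewrite /iotaF -E /alphaF; symmetry; exact: (rmorphXn (in_qpoly q) m 'X).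
Qed.

Lemma FG_alpha_act g : gf_act FG g alphaF = iotaF (c g) * alphaF.
Proof.
by rewrite /= /alphaF actF_in trX -mul_polyC in_qpolyM.
Qed.

End FieldConstr.

End FieldSec.

Lemma part2 (G : permGroup) (K : GField G) (n : nat) :
  smoothGF K -> (0 < n)%N -> no_proper_open_finite_index G ->
   forall (V : lmodType K) (actV : G -> V -> V),
     @invertible_object G K V actV -> @pic_order G K V actV n ->
     exists a : K, @ginv_class G K n a /\ @contained_in_kummer_ext G K n a V actV.
Proof.
move=> smK n0 noF V actV [[addV semV oneV mulV openV] _] [v [c [v0 span Ev [_ [b [nb Eb]]] _]]].
move: nb; rewrite /unitsK => nb.
have scI : forall x y : K, x *: v = y *: v -> x = y.
  move=> x y /eqP; rewrite -subr_eq0 -scalerBl scaler_eq0 (negPf v0) orbF subr_eq0 => /eqP //.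
have actV0 g : actV g 0 = 0.
  by apply: (addrI (actV g 0)); rewrite -addV !addr0.
have c1 : c pg_one = 1 by apply: scI; rewrite -Ev oneV scale1r.
have cc : forall g h, c (pg_mul g h) = c g * gf_act K g (c h).
  by move=> g h; apply: scI; rewrite -Ev mulV Ev semV Ev scalerA mulrC.
have nc : forall g, c g != 0.
  move=> g; apply/eqP => c0; move/eqP: v0; apply.
  by rewrite -(oneV v) -(pg_mulV g) mulV Ev c0 scale0r actV0.
have lcc : loc_const1 c.
  have L := orbit_lc (A := actV) (t := v) oneV mulV (openV v).
  move=> g; have [U [oU Ug E]] := L g; exists U; split => // u Uu.
  by apply: scI; rewrite -!Ev; exact: E.
pose P : {poly K} := 'X^n - b%:P.
have sP : size P = n.+1 by rewrite size_XnsubC.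
have P0 : P != 0 by rewrite -size_poly_gt0 sP.
have trP : forall g, exists k, k != 0 /\ tr c g P = k *: P.
  move=> g; exists (gf_act K g b / b); split.
    by rewrite mulf_neq0 ?invr_eq0 // fmorph_eq0.
  by rewrite /P trB trXn trC (Eb g) mul1r scalerBr scale_polyC divfK.
have [q0 [iq0 q0P]] : exists q0, irreducible_poly q0 /\ q0 %| P by apply: irr_exists; rewrite sP ltnS.
pose q := (lead_coef q0)^-1 *: q0.
have lq0 : lead_coef q0 != 0 by rewrite lead_coef_eq0 irredp_neq0.
have qm : q \is monic by rewrite monicE lead_coefZ mulVf.
have iq : irreducible_poly q.
  split; first by rewrite size_scale ?invr_eq0 // iq0.1.
  move=> d d1; rewrite dvdpZr ?invr_eq0 // => dq0.
  apply: eqp_trans (iq0 d d1 dq0) _; by rewrite eqp_sym eqp_scale // invr_eq0.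
have qP : q %| P by rewrite dvdpZl ?invr_eq0.
have qI : monic_irreducible_poly q := (iq, qm).
have stab := stable_all nc cc c1 smK lcc noF iq qP P0 trP.
pose F := FG cc c1 qI stab.
exists b; split.
  split => // g; exists (c g); split => //.
  by rewrite (Eb g) mul1r mulrC divfK.
have alX : alphaF qI ^+ n = iotaF qI b by apply: FG_alphaX.
have alpha0 : alphaF qI != 0.
  apply/eqP => a0; move: alX; rewrite a0 expr0n gtn_eqF // => /esym/eqP.
  by rewrite fmorph_eq0 (negPf nb).
have ex : forall w, exists x, w == x *: v by move=> w; have [x ->] := span w; exists x.
pose co w := xchoose (ex w).
have coP w : w = co w *: v by exact: (eqP (xchooseP (ex w))).
have coU w x : w = x *: v -> co w = x by move=> E; apply: scI; rewrite -coP.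
pose phi w := iotaF qI (co w) * alphaF qI.
exists F, (iotaF qI : {rmorphism K -> FF qI}), (alphaF qI); split.
- exact: FG_smooth.
- move=> g x; exact: FG_iota.
- exact: alX.
- exact: FG_gen.
- exists phi; split.
  + move=> u w; rewrite /phi.
    have -> : co (u + w) = co u + co w by apply: coU; rewrite scalerDl -!coP.
    by rewrite rmorphD mulrDl.
  + move=> x w; rewrite /phi.
    have -> : co (x *: w) = x * co w by apply: coU; rewrite -scalerA -coP.
    by rewrite rmorphM mulrA.
  + move=> u w; rewrite /phi => /(mulIf alpha0) /fmorph_inj E.
    by rewrite (coP u) (coP w) E.
  + move=> g w; rewrite /phi.
    have -> : co (actV g w) = gf_act K g (co w) * c g.
      by apply: coU; rewrite {1}(coP w) semV Ev scalerA.
    rewrite (@gf_actM G F) FG_iota FG_alpha_act.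
    by rewrite rmorphM mulrA.
Qed.

Theorem proposition5p21 (G : permGroup) (K : GField G) (n : nat) :
  smoothGF K -> (0 < n)%N ->
  @kummer_exact_sequence G K n /\
  (no_proper_open_finite_index G ->
   forall (V : lmodType K) (actV : G -> V -> V),
     @invertible_object G K V actV -> @pic_order G K V actV n ->
     exists a : K, @ginv_class G K n a /\ @contained_in_kummer_ext G K n a V actV).
Proof.
move=> smK n0; split; first exact: part1.
move=> noF V actV; exact: part2.
Qed.
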